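(* Let $(\mathcal{U},f,g,\preccurlyeq)$ be a fault-tolerance partially ordered $(m,n)$-semiring as described in the context, and let $x_1,\ldots,x_m,y_1,\ldots,y_n\in\mathcal{U}$ be disjoint components. Then (i) $f(x_1^m)\preccurlyeq f(f(x_1^m),f(x_1^m),\ldots,f(x_1^m))$ (with $m$ copies of $f(x_1^m)$); (ii) $g(g(y_1^n),g(y_1^n),\ldots,g(y_1^n))\preccurlyeq g(y_1^n)$ (with $n$ copies of $g(y_1^n)$).
   Context: Notation: $x_i^j$ denotes $x_i,\ldots,x_j$. $(\mathcal{U},f,g)$ is an $(m,n)$-semiring: $f$ is an associative $m$-ary and $g$ an associative $n$-ary operation on $\mathcal{U}$ (associativity of a $k$-ary $h$: $h(x_1^{i-1},h(x_i^{k+i-1}),x_{k+i}^{2k-1})=h(x_1^{j-1},h(x_j^{k+j-1}),x_{k+j}^{2k-1})$ for $1\le i\le j\le k$), and $g$ distributes over $f$ in every position. $\mathcal{U}$ is interpreted as a set of systems; $f(x_1^m)$ is the system that fails when any $x_i$ fails, $g(y_1^n)$ the system that fails only when all $y_j$ fail; elements are assumed to be disjoint components (failing independently), which imposes no further algebraic condition. $\mathbf{0}\in\mathcal{U}$ (the always-up system) is an $f$-identity ($f(\mathbf{0},\ldots,x,\ldots,\mathbf{0})=x$ in every position) and $\mathbf{1}$ (the always-down system) is a $g$-identity; moreover $g(y_1^{j-1},\mathbf{0},y_{j+1}^n)=\mathbf{0}$ and $f(x_1^{i-1},\mathbf{1},x_{i+1}^m)=\mathbf{1}$ for all arguments and positions.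 $\preccurlyeq$ is a partial order on $\mathcal{U}$ (''fault-tolerance partial order'') such that $(\mathcal{U},f,g,\preccurlyeq)$ is a partially ordered $(m,n)$-semiring: $a\preccurlyeq b$ implies $f(x_1^{i-1},a,x_{i+1}^m)\preccurlyeq f(x_1^{i-1},b,x_{i+1}^m)$ and $g(y_1^{j-1},a,y_{j+1}^n)\preccurlyeq g(y_1^{j-1},b,y_{j+1}^n)$ for all arguments and all positions; and $\mathbf{0}\preccurlyeq a\preccurlyeq\mathbf{1}$ for all $a\in\mathcal{U}$. *)

(* Defs.v *)
From mathcomp Require Import all_boot.
Set Implicit Arguments. Unset Strict Implicit. Unset Printing Implicit Defensive.

(* The k-tuple (s_0, ..., s_{k-1}) built from a sequence s (d is an
   irrelevant default, only used when size s < k). *)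
Definition tup_of (U : Type) (k : nat) (d : U) (s : seq U) : k.-tuple U :=
  [tuple nth d s i | i < k].

Definition tset (U : Type) (k : nat) (a : k.-tuple U) (j : 'I_k) (v : U)
  : k.-tuple U :=
  [tuple if i == j then v else tnth a i | i < k].

(* Associativity of a k-ary operation h: for every (x_1,...,x_{2k-1}),
   h(x_1^{i-1}, h(x_i^{k+i-1}), x_{k+i}^{2k-1}) is independent of
   i in 1..k  (here i is 0-based). *)
Definition assoc_op (U : Type) (k : nat) (d : U) (h : k.-tuple U -> U) : Prop :=
  forall (s : seq U), size s = (2 * k - 1)%N ->
  forall i j : nat, (i <= j < k)%N ->
    h (tup_of k d (take i s ++ h (tup_of k d (take k (drop i s))) :: drop (i + k) s))
    = h (tup_of k d (take j s ++ h (tup_of k d (take k (drop j s))) :: drop (j + k) s)).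

(* Partially ordered (m,n)-semiring (U, f, g, le) with f-identity zero
   (always-up system) and g-identity one (always-down system), satisfying
   the fault-tolerance conditions of the context. *)
Record fault_tolerance_po_semiring (U : Type) (m n : nat)
    (f : m.-tuple U -> U) (g : n.-tuple U -> U) (zero one : U)
    (le : U -> U -> Prop) : Prop := {
  ft_m : (2 <= m)%N;
  ft_n : (2 <= n)%N;
  ft_f_assoc : assoc_op zero f;
  ft_g_assoc : assoc_op zero g;
  ft_distr : forall (a : n.-tuple U) (j : 'I_n) (x : m.-tuple U),
      g (tset a j (f x)) = f [tuple g (tset a j (tnth x i)) | i < m];
  ft_zero_id : forall (i : 'I_m) (x : U), f (tset [tuple zero | _ < m] i x) = x;
  ft_one_id : forall (j : 'I_n) (y : U), g (tset [tuple one | _ < n] j y) = y;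
  ft_g_zero : forall (a : n.-tuple U) (j : 'I_n), g (tset a j zero) = zero;
  ft_f_one : forall (a : m.-tuple U) (i : 'I_m), f (tset a i one) = one;
  ft_le_refl : forall a, le a a;
  ft_le_antisym : forall a b, le a b -> le b a -> a = b;
  ft_le_trans : forall a b c, le a b -> le b c -> le a c;
  ft_f_mono : forall (x : m.-tuple U) (i : 'I_m) (a b : U),
      le a b -> le (f (tset x i a)) (f (tset x i b));
  ft_g_mono : forall (y : n.-tuple U) (j : 'I_n) (a b : U),
      le a b -> le (g (tset y j a)) (g (tset y j b));
  ft_zero_le : forall a, le zero a;
  ft_le_one : forall a, le a one
}.

(* Main.v *)
Require Import Defs.
From mathcomp Require Import all_boot.

Lemma chain_gen (U : Type) (K : nat) (h : K.-tuple U -> U) (R : U -> U -> Prop)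
  (Rrefl : forall a, R a a) (Rtrans : forall a b c, R a b -> R b c -> R a c)
  (mono : forall (x : K.-tuple U) (i : 'I_K) (a b : U), R a b -> R (h (tset x i a)) (h (tset x i b)))
  (e c : U) (Rec : R e c) :
  forall k, (k < K)%N ->
    R (h [tuple (if (nat_of_ord i <= 0)%N then c else e) | i < K])
      (h [tuple (if (nat_of_ord i <= k)%N then c else e) | i < K]).
Proof.
elim=> [|k IH] Hk; first exact: Rrefl.
apply: (Rtrans _ _ _ (IH (ltnW Hk))).
set t := [tuple (if (nat_of_ord i <= k)%N then c else e) | i < K].
have E1 : t = tset t (Ordinal Hk) e.
  apply: eq_from_tnth => i; rewrite /tset !tnth_mktuple.
  case: eqP => [->|] //=; by rewrite ltnn.
have E2 : [tuple (if (nat_of_ord i <= k.+1)%N then c else e) | i < K]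
          = tset t (Ordinal Hk) c.
  apply: eq_from_tnth => i; rewrite /tset !tnth_mktuple.
  case: eqP => [->|/eqP Hne] //=; first by rewrite leqnn.
  rewrite leq_eqVlt ltnS.
  have -> : (nat_of_ord i == k.+1) = false.
    by apply/negbTE; apply: contra Hne => /eqP H; apply/eqP; apply: val_inj.
  by [].
rewrite E2 {1}E1; exact: mono.
Qed.

Lemma chain_full (U : Type) (K : nat) (h : K.-tuple U -> U) (R : U -> U -> Prop)
  (Rrefl : forall a, R a a) (Rtrans : forall a b c, R a b -> R b c -> R a c)
  (mono : forall (x : K.-tuple U) (i : 'I_K) (a b : U), R a b -> R (h (tset x i a)) (h (tset x i b)))
  (e c : U) (Rec : R e c) (HK : (0 < K)%N)
  (idl : h (tset [tuple e | _ < K] (Ordinal HK) c) = c) :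
  R c (h [tuple c | _ < K]).
Proof.
have H0 : [tuple (if (nat_of_ord i <= 0)%N then c else e) | i < K]
          = tset [tuple e | _ < K] (Ordinal HK) c.
  apply: eq_from_tnth => i; rewrite /tset !tnth_mktuple.
  case: eqP => [->|/eqP Hne] //=.
  rewrite leqn0.
  have -> : (nat_of_ord i == 0) = false.
    by apply/negbTE; apply: contra Hne => /eqP H; apply/eqP; apply: val_inj.
  by [].
have HK1 : (K.-1 < K)%N by rewrite prednK.
have := @chain_gen U K h R Rrefl Rtrans mono e c Rec _ HK1.
rewrite H0 idl.
have -> : [tuple (if (nat_of_ord i <= K.-1)%N then c else e) | i < K] = [tuple c | _ < K] => //.
apply: eq_from_tnth => i; rewrite !tnth_mktuple.
by rewrite -ltnS prednK // ltn_ord.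
Qed.

Theorem theorem11 (U : Type) (m n : nat)
    (f : m.-tuple U -> U) (g : n.-tuple U -> U) (zero one : U)
    (le : U -> U -> Prop) :
  fault_tolerance_po_semiring f g zero one le ->
  forall (x : m.-tuple U) (y : n.-tuple U),
    le (f x) (f [tuple f x | _ < m]) /\
    le (g [tuple g y | _ < n]) (g y).
Proof.
move=> H x y.
have Hm : (0 < m)%N by apply: leq_trans (ft_m H).
have Hn : (0 < n)%N by apply: leq_trans (ft_n H).
split.
- apply: (@chain_full U m f le (ft_le_refl H) (ft_le_trans H) (ft_f_mono H) zero (f x) (ft_zero_le H (f x)) Hm).
  by rewrite (ft_zero_id H).
- apply: (@chain_full U n g (fun a b => le b a) (ft_le_refl H)
           (fun a b c h1 h2 => ft_le_trans H h2 h1)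
           (fun t i a b h => ft_g_mono H t i h) one (g y) (ft_le_one H (g y)) Hn).
  by rewrite (ft_one_id H).
Qed.
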